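(* Let $\mu,\nu\in\mathbb{C}$. (1) $\mathcal{D}_{\mu,\nu}=\mathcal{D}_{\nu,\mu}$. (2) For every $\lambda\in\mathbb{C}$, the differential equation $\mathcal{D}_{\mu,\nu}u=\lambda u$ has a regular singularity at $x=0$, with characteristic exponents $0,-\mu,-\nu,-\mu-\nu$. (3) If $\mu,\nu$ are real with $\mu,\nu\geq -1$, then $\mathcal{D}_{\mu,\nu}$ (on $C_c^\infty(\mathbb{R}_+)$) is a symmetric operator on $L^2(\mathbb{R}_+,x^{\mu+\nu+1}\,dx)$. (5) $\mathcal{D}_{\mu,\pm1}=\mathcal{S}_{\mu,\pm1}^2-C_{\mu,\pm1}$, where $\mathcal{S}_{\mu,-1}=\frac1x\big(\theta(\theta+\mu)-x^2\big)$, $C_{\mu,-1}=\frac{(\mu+1)^2}{2}$, and $\mathcal{S}_{\mu,+1}=\frac1x\big(\theta(\theta+\mu+2)+\mu+1-x^2\big)$, $C_{\mu,+1}=\frac{(\mu+1)^2}{2}+2$.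
   Context: Let $\theta=x\frac{d}{dx}$ be the Euler operator on functions on $\mathbb{R}_+=(0,\infty)$; products of operators denote composition, and $\frac1x$, $x^2$ denote multiplication operators. For $\mu,\nu\in\mathbb{C}$ define the fourth order differential operator $$\mathcal{D}_{\mu,\nu}=\frac{1}{x^2}\big((\theta+\nu)(\theta+\mu+\nu)-x^2\big)\big(\theta(\theta+\mu)-x^2\big)-\frac{(\mu-\nu)(\mu+\nu+2)}{2}.$$ *)

(* Defs.v *)
From Stdlib Require Import Reals List ClassicalEpsilon.
Open Scope R_scope.

Record Cplx := mkC { re : R; im : R }.

Definition RtoC (x : R) : Cplx := mkC x 0.
Definition C0 : Cplx := RtoC 0.
Definition C1 : Cplx := RtoC 1.
Definition Cadd (z w : Cplx) : Cplx := mkC (re z + re w) (im z + im w).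
Definition Copp (z : Cplx) : Cplx := mkC (- re z) (- im z).
Definition Csub (z w : Cplx) : Cplx := Cadd z (Copp w).
Definition Cmul (z w : Cplx) : Cplx :=
  mkC (re z * re w - im z * im w) (re z * im w + im z * re w).
Definition Cconj (z : Cplx) : Cplx := mkC (re z) (- im z).
Fixpoint Cpow (z : Cplx) (n : nat) : Cplx :=
  match n with O => C1 | S k => Cmul z (Cpow z k) end.

Declare Scope C_scope.
Delimit Scope C_scope with Cplx.
Infix "+" := Cadd : C_scope.
Infix "-" := Csub : C_scope.
Infix "*" := Cmul : C_scope.
Notation "- z" := (Copp z) : C_scope.
Infix "^" := Cpow : C_scope.

Definition Csum (n : nat) (f : nat -> Cplx) : Cplx :=
  fold_right Cadd C0 (map f (seq 0 n)).
Definition Cprod_list (l : list Cplx) : Cplx := fold_right Cmul C1 l.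

(* the derivative of g at x if it exists (junk value otherwise) *)
Definition Rderiv (g : R -> R) (x : R) : R :=
  epsilon (inhabits 0) (fun l => derivable_pt_lim g x l).
Definition deriv (u : R -> Cplx) (x : R) : Cplx :=
  mkC (Rderiv (fun t => re (u t)) x) (Rderiv (fun t => im (u t)) x).

(* u is Cplx^infinity on R_+ = (0,oo) (values at x <= 0 are irrelevant) *)
Definition smooth_pos (u : R -> Cplx) : Prop :=
  exists F : nat -> R -> Cplx,
    (forall x, 0 < x -> F O x = u x) /\
    (forall n x, 0 < x ->
       derivable_pt_lim (fun t => re (F n t)) x (re (F (S n) x)) /\
       derivable_pt_lim (fun t => im (F n t)) x (im (F (S n) x))).

Definition Ccinf_pos (u : R -> Cplx) : Prop :=
  smooth_pos u /\
  exists a b, 0 < a /\ a < b /\ forall x, 0 < x -> (x < a \/ b < x) -> u x = C0.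

Definition Op := (R -> Cplx) -> (R -> Cplx).

Definition theta : Op := fun u x => (RtoC x * deriv u x)%Cplx.
Definition thp (a : Cplx) : Op := fun u x => (theta u x + a * u x)%Cplx.
Definition x2 (x : R) : Cplx := RtoC (x * x).

(* D_{mu,nu} = x^{-2} ((theta+nu)(theta+mu+nu) - x^2)(theta(theta+mu) - x^2)
               - (mu-nu)(mu+nu+2)/2 *)
Definition Bop (mu : Cplx) : Op :=
  fun u x => (theta (thp mu u) x - x2 x * u x)%Cplx.
Definition Aop (mu nu : Cplx) : Op :=
  fun w x => (thp nu (thp (mu + nu)%Cplx w) x - x2 x * w x)%Cplx.
Definition Dop (mu nu : Cplx) : Op :=
  fun u x => (RtoC (/ (x * x)) * Aop mu nu (Bop mu u) x
              - (mu - nu) * (mu + nu + RtoC 2) * RtoC (/ 2) * u x)%Cplx.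

Definition Sm1 (mu : Cplx) : Op :=
  fun u x => (RtoC (/ x) * (theta (thp mu u) x - x2 x * u x))%Cplx.
Definition Cm1 (mu : Cplx) : Cplx := ((mu + C1) * (mu + C1) * RtoC (/ 2))%Cplx.
Definition Sp1 (mu : Cplx) : Op :=
  fun u x => (RtoC (/ x) * (theta (thp (mu + RtoC 2) u) x
                             + (mu + C1) * u x - x2 x * u x))%Cplx.
Definition Cp1 (mu : Cplx) : Cplx := ((mu + C1) * (mu + C1) * RtoC (/ 2) + RtoC 2)%Cplx.

Definition Cseries_cv (c : nat -> Cplx) (x : R) (l : Cplx) : Prop :=
  Un_cv (fun N => re (Csum (S N) (fun k => c k * Cpow (RtoC x) k)%Cplx)) (re l) /\
  Un_cv (fun N => im (Csum (S N) (fun k => c k * Cpow (RtoC x) k)%Cplx)) (im l).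

Definition analytic_at0 (f : R -> Cplx) (r : R) : Prop :=
  exists c : nat -> Cplx, forall x, Rabs x < r -> Cseries_cv c x (f x).

(* The linear ODE  L u = 0  has a regular singularity (in Fuchs' sense) at x = 0
   with characteristic exponents rho (listed with multiplicity):
   near 0 it is equivalent (via a nonvanishing factor g) to
       theta^n u + b_{n-1}(x) theta^{n-1} u + ... + b_0(x) u = 0
   with b_j analytic at 0, and the indicial polynomial
       s^n + b_{n-1}(0) s^{n-1} + ... + b_0(0)
   equals prod_{rho_i in rho} (s - rho_i). *)
Definition reg_sing_at0 (L : Op) (rho : list Cplx) : Prop :=
  exists (n : nat) (b : nat -> R -> Cplx) (g : R -> Cplx) (r : R),
    0 < r /\ length rho = n /\
    (forall j, (j < n)%nat -> analytic_at0 (b j) r) /\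
    (forall x, 0 < x < r -> g x <> C0) /\
    (forall u, smooth_pos u -> forall x, 0 < x < r ->
       L u x = (g x * (Nat.iter n theta u x
                       + Csum n (fun j => b j x * Nat.iter j theta u x)))%Cplx) /\
    (forall s : Cplx,
       (Cpow s n + Csum n (fun j => b j 0 * Cpow s j))%Cplx
       = Cprod_list (map (fun rh => (s - rh)%Cplx) rho)).

Definition shift_op (L : Op) (lam : Cplx) : Op := fun u x => (L u x - lam * u x)%Cplx.

Definition RInt_is (f : R -> R) (a b I : R) : Prop :=
  exists pr : Riemann_integrable f a b, RiemannInt pr = I.
Definition CInt_is (f : R -> Cplx) (a b : R) (I : Cplx) : Prop :=
  RInt_is (fun x => re (f x)) a b (re I) /\ RInt_is (fun x => im (f x)) a b (im I).

(* <f, g> in L^2(R_+, x^{mu+nu+1} dx) for f, g vanishing on R_+ outside [a,b]: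
   the integrand of the inner product *)
Definition L2_integrand (w : R) (f g : R -> Cplx) : R -> Cplx :=
  fun x => (f x * Cconj (g x) * RtoC (Rpower x w))%Cplx.

(* Main.v *)
Require Import Defs.
From Stdlib Require Import Reals List.
From Stdlib Require Import Lra Lia Field ClassicalEpsilon.
Open Scope R_scope.


Lemma Ceq (z w : Cplx) : re z = re w -> im z = im w -> z = w.
Proof. destruct z, w; simpl; intros; subst; reflexivity. Qed.

Definition agree (f E : R -> Cplx) := forall t, 0 < t -> f t = E t.
Definition hasD (E E' : R -> Cplx) := forall t, 0 < t ->
  derivable_pt_lim (fun s => re (E s)) t (re (E' t)) /\
  derivable_pt_lim (fun s => im (E s)) t (im (E' t)).
Definition jets (F : nat -> R -> Cplx) := forall n x, 0 < x ->
  derivable_pt_lim (fun t => re (F n t)) x (re (F (S n) x)) /\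
  derivable_pt_lim (fun t => im (F n t)) x (im (F (S n) x)).

Lemma dpl_eq f g t l l' : derivable_pt_lim f t l -> l = l' ->
  (forall s, f s = g s) -> derivable_pt_lim g t l'.
Proof. intros H -> E. exact (derivable_pt_lim_ext f g t l' E H). Qed.

Lemma dpl_pos (g h : R -> R) t l : 0 < t -> (forall s, 0 < s -> g s = h s) ->
  derivable_pt_lim g t l -> derivable_pt_lim h t l.
Proof.
  intros Ht E H. apply (derivable_pt_lim_locally_ext g h t 0 (t+1)); auto; try lra.
  intros z Hz; apply E; lra.
Qed.

Lemma agree_deriv f E E' : agree f E -> hasD E E' -> agree (deriv f) E'.
Proof.
  intros HA HD t Ht. destruct (HD t Ht) as [H1 H2].
  assert (K1 : derivable_pt_lim (fun s => re (f s)) t (re (E' t))).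
  { apply (dpl_pos (fun s => re (E s))); auto. intros s Hs; rewrite HA; auto. }
  assert (K2 : derivable_pt_lim (fun s => im (f s)) t (im (E' t))).
  { apply (dpl_pos (fun s => im (E s))); auto. intros s Hs; rewrite HA; auto. }
  unfold deriv, Rderiv. apply Ceq; simpl.
  - apply (uniqueness_limite (fun s => re (f s)) t); auto.
    apply (epsilon_spec (inhabits 0) (fun l => derivable_pt_lim (fun t => re (f t)) t l)).
    exists (re (E' t)); exact K1.
  - apply (uniqueness_limite (fun s => im (f s)) t); auto.
    apply (epsilon_spec (inhabits 0) (fun l => derivable_pt_lim (fun t => im (f t)) t l)).
    exists (im (E' t)); exact K2.
Qed.

Lemma agree_add f g E1 E2 : agree f E1 -> agree g E2 ->
  agree (fun t => f t + g t)%Cplx (fun t => E1 t + E2 t)%Cplx.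
Proof. intros A B t Ht; rewrite A, B; auto. Qed.
Lemma agree_sub f g E1 E2 : agree f E1 -> agree g E2 ->
  agree (fun t => f t - g t)%Cplx (fun t => E1 t - E2 t)%Cplx.
Proof. intros A B t Ht; rewrite A, B; auto. Qed.
Lemma agree_mul f g E1 E2 : agree f E1 -> agree g E2 ->
  agree (fun t => f t * g t)%Cplx (fun t => E1 t * E2 t)%Cplx.
Proof. intros A B t Ht; rewrite A, B; auto. Qed.
Lemma agree_opp f E1 : agree f E1 -> agree (fun t => - f t)%Cplx (fun t => - E1 t)%Cplx.
Proof. intros A t Ht; rewrite A; auto. Qed.
Lemma agree_conj f E1 : agree f E1 -> agree (fun t => Cconj (f t)) (fun t => Cconj (E1 t)).
Proof. intros A t Ht; rewrite A; auto. Qed.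
Lemma agree_refl f : agree f f.
Proof. intros t _; reflexivity. Qed.

Lemma agree_eq f g E1 E2 x : agree f E1 -> agree g E2 -> 0 < x -> E1 x = E2 x -> f x = g x.
Proof. intros A B Hx E; rewrite A, B; auto. Qed.

Lemma hasD_F F n : jets F -> hasD (F n) (F (S n)).
Proof. intros J t Ht; apply J; auto. Qed.

Lemma hasD_real c c' : (forall t, 0 < t -> derivable_pt_lim c t (c' t)) ->
  hasD (fun t => RtoC (c t)) (fun t => RtoC (c' t)).
Proof. intros H t Ht; split; simpl; auto. apply derivable_pt_lim_const. Qed.

Lemma hasD_const a : hasD (fun _ => a) (fun _ => C0).
Proof. intros t Ht; split; simpl; apply derivable_pt_lim_const. Qed.

Lemma hasD_id : hasD (fun t => RtoC t) (fun _ => RtoC 1).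
Proof. apply (hasD_real (fun t => t)). intros; apply derivable_pt_lim_id. Qed.

Lemma hasD_ext E D D' : hasD E D -> (forall t, 0 < t -> D t = D' t) -> hasD E D'.
Proof. intros H E1 t Ht; rewrite <- E1; auto. Qed.

Lemma hasD_x2 : hasD (fun t => x2 t) (fun t => RtoC 2 * RtoC t)%Cplx.
Proof. eapply hasD_ext. apply (hasD_real (fun t => t * t) (fun t => 2 * t)). intros t _.
  eapply dpl_eq. apply (derivable_pt_lim_mult id id); apply derivable_pt_lim_id.
  unfold id; ring. reflexivity.
  intros t _; apply Ceq; simpl; ring. Qed.

Lemma hasD_inv : hasD (fun t => RtoC (/ t)) (fun t => - (RtoC (/ t) * RtoC (/ t)))%Cplx.
Proof. eapply hasD_ext. apply (hasD_real (fun t => / t) (fun t => - / (t * t))). intros t Ht.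
  eapply dpl_eq. apply (derivable_pt_lim_div (fun _ => 1) id).
  apply derivable_pt_lim_const. apply derivable_pt_lim_id. unfold id; lra.
  unfold id, Rsqr; field; lra. intros; unfold div_fct, id, Rdiv; ring.
  intros t Ht; apply Ceq; simpl; field; lra. Qed.

Lemma hasD_inv2 : hasD (fun t => RtoC (/ (t * t)))
   (fun t => - (RtoC 2 * (RtoC (/ t) * RtoC (/ (t * t)))))%Cplx.
Proof. eapply hasD_ext. apply (hasD_real (fun t => / (t * t)) (fun t => - (2 * t) / (t * t * (t * t)))). intros t Ht.
  eapply dpl_eq. apply (derivable_pt_lim_div (fun _ => 1) (fun t => t * t)).
  apply derivable_pt_lim_const. apply (derivable_pt_lim_mult id id); apply derivable_pt_lim_id.
  intro H; assert (0 < t * t) by (apply Rmult_lt_0_compat; lra); lra.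
  unfold id, Rsqr; field; lra. intros; unfold div_fct, id, Rdiv; ring.
  intros t Ht; apply Ceq; simpl; field; lra. Qed.

Lemma hasD_rpow w : hasD (fun t => RtoC (Rpower t w))
   (fun t => RtoC w * (RtoC (/ t) * RtoC (Rpower t w)))%Cplx.
Proof. eapply hasD_ext. apply (hasD_real (fun t => Rpower t w) (fun t => w * / t * Rpower t w)). intros t Ht.
  eapply dpl_eq. apply derivable_pt_lim_power; auto.
  replace (w - 1) with (w + - (1)) by ring. rewrite Rpower_plus, Rpower_Ropp, Rpower_1; auto.
  field; lra. reflexivity.
  intros t Ht; apply Ceq; simpl; ring. Qed.

Lemma hasD_add E1 E2 D1 D2 : hasD E1 D1 -> hasD E2 D2 ->
  hasD (fun t => E1 t + E2 t)%Cplx (fun t => D1 t + D2 t)%Cplx.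
Proof. intros A B t Ht; destruct (A t Ht), (B t Ht); simpl; split.
  apply (derivable_pt_lim_plus (fun s => re (E1 s)) (fun s => re (E2 s))); auto.
  apply (derivable_pt_lim_plus (fun s => im (E1 s)) (fun s => im (E2 s))); auto. Qed.
Lemma hasD_opp E1 D1 : hasD E1 D1 -> hasD (fun t => - E1 t)%Cplx (fun t => - D1 t)%Cplx.
Proof. intros A t Ht; destruct (A t Ht); simpl; split.
  apply (derivable_pt_lim_opp (fun s => re (E1 s))); auto.
  apply (derivable_pt_lim_opp (fun s => im (E1 s))); auto. Qed.
Lemma hasD_sub E1 E2 D1 D2 : hasD E1 D1 -> hasD E2 D2 ->
  hasD (fun t => E1 t - E2 t)%Cplx (fun t => D1 t - D2 t)%Cplx.
Proof. intros A B. unfold Csub. apply (hasD_add E1 (fun t => - E2 t)%Cplx); auto.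
  apply hasD_opp; auto. Qed.
Lemma hasD_conj E1 D1 : hasD E1 D1 -> hasD (fun t => Cconj (E1 t)) (fun t => Cconj (D1 t)).
Proof. intros A t Ht; destruct (A t Ht); simpl; split; auto.
  apply (derivable_pt_lim_opp (fun s => im (E1 s))); auto. Qed.
Lemma hasD_mul E1 E2 D1 D2 : hasD E1 D1 -> hasD E2 D2 ->
  hasD (fun t => E1 t * E2 t)%Cplx (fun t => D1 t * E2 t + E1 t * D2 t)%Cplx.
Proof. intros A B t Ht; destruct (A t Ht) as [a1 a2], (B t Ht) as [b1 b2]; simpl; split.
  - eapply dpl_eq. apply (derivable_pt_lim_minus
      (fun s => re (E1 s) * re (E2 s)) (fun s => im (E1 s) * im (E2 s))).
    exact (derivable_pt_lim_mult (fun s => re (E1 s)) (fun s => re (E2 s)) _ _ _ a1 b1).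
    exact (derivable_pt_lim_mult (fun s => im (E1 s)) (fun s => im (E2 s)) _ _ _ a2 b2).
    all: cbv beta; try ring; try reflexivity.
  - eapply dpl_eq. apply (derivable_pt_lim_plus
      (fun s => re (E1 s) * im (E2 s)) (fun s => im (E1 s) * re (E2 s))).
    exact (derivable_pt_lim_mult (fun s => re (E1 s)) (fun s => im (E2 s)) _ _ _ a1 b2).
    exact (derivable_pt_lim_mult (fun s => im (E1 s)) (fun s => re (E2 s)) _ _ _ a2 b1).
    all: cbv beta; try ring; try reflexivity. Qed.

Ltac solveD :=
  lazymatch goal with
  | |- hasD (fun t => Cadd (@?a t) (@?b t)) _ => eapply (hasD_add a b); [solveD|solveD]
  | |- hasD (fun t => Csub (@?a t) (@?b t)) _ => eapply (hasD_sub a b); [solveD|solveD]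
  | |- hasD (fun t => Cmul (@?a t) (@?b t)) _ => eapply (hasD_mul a b); [solveD|solveD]
  | |- hasD (fun t => Copp (@?a t)) _ => eapply (hasD_opp a); solveD
  | |- hasD (fun t => Cconj (@?a t)) _ => eapply (hasD_conj a); solveD
  | |- hasD (fun t => RtoC t) _ => apply hasD_id
  | |- hasD (fun t => RtoC (/ t)) _ => apply hasD_inv
  | |- hasD (fun t => RtoC (/ (t * t))) _ => apply hasD_inv2
  | |- hasD (fun t => x2 t) _ => apply hasD_x2
  | |- hasD x2 _ => apply hasD_x2
  | |- hasD (fun t => RtoC (Rpower t _)) _ => apply hasD_rpow
  | |- hasD (fun t => ?F ?n t) _ => apply hasD_F; assumption
  | |- hasD (?F ?n) _ => apply hasD_F; assumption
  | |- hasD (fun t => _) _ => apply hasD_const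
  end.

Ltac solveA :=
  lazymatch goal with
  | |- agree (fun t => Cadd (@?a t) (@?b t)) _ => eapply (agree_add a b); [solveA|solveA]
  | |- agree (fun t => Csub (@?a t) (@?b t)) _ => eapply (agree_sub a b); [solveA|solveA]
  | |- agree (fun t => Cmul (@?a t) (@?b t)) _ => eapply (agree_mul a b); [solveA|solveA]
  | |- agree (fun t => Copp (@?a t)) _ => eapply (agree_opp a); solveA
  | |- agree (fun t => Cconj (@?a t)) _ => eapply (agree_conj a); solveA
  | |- agree (fun t => deriv ?f t) _ => eapply (agree_deriv f); [solveA|solveD]
  | |- agree (deriv ?f) _ => eapply (agree_deriv f); [solveA|solveD]
  | |- _ => first [eassumption | apply agree_refl]
  end.

Ltac unf := cbv beta iota delta [Dop Aop Bop theta thp Sm1 Sp1 Cm1 Cp1 shift_op L2_integrand Nat.iter nat_rect].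



Fixpoint smk (k : nat) (P : R -> Cplx) : Prop :=
  match k with O => True | S k => exists P', hasD P P' /\ smk k P' end.

Lemma smk_S_le k P : smk (S k) P -> smk k P.
Proof.
  revert P; induction k as [|k IH]; intros P H; simpl; auto.
  destruct H as [P' [H1 H2]]. exists P'; split; auto.
Qed.

Lemma smk_le k m P : (m <= k)%nat -> smk k P -> smk m P.
Proof. intros H; induction H; auto. intro; apply IHle, smk_S_le; auto. Qed.

Lemma hasD_agree f E D : agree f E -> hasD E D -> hasD f D.
Proof.
  intros A H t Ht. destruct (H t Ht) as [H1 H2]. split.
  - apply (dpl_pos (fun s => re (E s))); auto. intros; rewrite A; auto.
  - apply (dpl_pos (fun s => im (E s))); auto. intros; rewrite A; auto.
Qed.

Lemma smk_ext k P Q : (forall t, 0 < t -> P t = Q t) -> smk k P -> smk k Q.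
Proof.
  destruct k; simpl; auto. intros E [P' [H1 H2]]. exists P'; split; auto.
  apply (hasD_agree Q P); auto. intros t Ht; symmetry; auto.
Qed.

Lemma smk_const k a : smk k (fun _ => a).
Proof. revert a; induction k; simpl; auto. intros a. exists (fun _ => C0); split; auto. apply hasD_const. Qed.

Lemma smk_add k P Q : smk k P -> smk k Q -> smk k (fun t => P t + Q t)%Cplx.
Proof.
  revert P Q; induction k as [|k IH]; simpl; auto.
  intros P Q [P' [HP SP]] [Q' [HQ SQ]]. exists (fun t => P' t + Q' t)%Cplx; split.
  apply hasD_add; auto. apply IH; auto.
Qed.

Lemma smk_mul k P Q : smk k P -> smk k Q -> smk k (fun t => P t * Q t)%Cplx.
Proof.
  revert P Q; induction k as [|k IH]; simpl; auto.
  intros P Q [P' [HP SP]] [Q' [HQ SQ]]. exists (fun t => P' t * Q t + P t * Q' t)%Cplx; split.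
  apply hasD_mul; auto.
  apply smk_add; apply IH; auto.
  - apply smk_S_le; simpl; eauto.
  - apply smk_S_le; simpl; eauto.
Qed.

Lemma smk_opp k P : smk k P -> smk k (fun t => - P t)%Cplx.
Proof.
  intro H. apply (smk_ext k (fun t => RtoC (-1) * P t)%Cplx).
  intros; apply Ceq; simpl; ring. apply smk_mul; auto. apply smk_const.
Qed.

Lemma smk_sub k P Q : smk k P -> smk k Q -> smk k (fun t => P t - Q t)%Cplx.
Proof. intros; apply smk_add; auto. apply smk_opp; auto. Qed.

Lemma smk_conj k P : smk k P -> smk k (fun t => Cconj (P t)).
Proof.
  revert P; induction k as [|k IH]; simpl; auto.
  intros P [P' [HP SP]]. exists (fun t => Cconj (P' t)); split; auto. apply hasD_conj; auto.
Qed.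

Lemma smk_id k : smk k (fun t => RtoC t).
Proof. destruct k; simpl; auto. exists (fun _ => RtoC 1); split. apply hasD_id. apply smk_const. Qed.

Lemma smk_inv k : smk k (fun t => RtoC (/ t)).
Proof.
  induction k as [|k IH]; simpl; auto.
  exists (fun t => - (RtoC (/ t) * RtoC (/ t)))%Cplx; split. apply hasD_inv.
  apply smk_opp, smk_mul; exact IH.
Qed.

Lemma smk_inv2 k : smk k (fun t => RtoC (/ (t * t))).
Proof.
  apply (smk_ext k (fun t => RtoC (/ t) * RtoC (/ t))%Cplx).
  intros t Ht; apply Ceq; simpl; field; lra. apply smk_mul; apply smk_inv.
Qed.

Lemma smk_jets F : jets F -> forall k n, smk k (F n).
Proof.
  intros J k; induction k as [|k IH]; simpl; auto. intros n.
  exists (F (S n)); split; auto. apply hasD_F; auto.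
Qed.

Lemma agree_deriv' P P' : hasD P P' -> agree (deriv P) P'.
Proof. intros H. apply (agree_deriv P P); auto. apply agree_refl. Qed.

Lemma smk_theta k P : smk (S k) P -> smk k (theta P).
Proof.
  intros [P' [HP SP]]. apply (smk_ext k (fun t => RtoC t * P' t)%Cplx).
  intros t Ht. unfold theta. rewrite (agree_deriv' P P' HP t Ht); auto.
  apply smk_mul; auto. apply smk_id.
Qed.

Lemma smk_thp k a P : smk (S k) P -> smk k (thp a P).
Proof.
  intros H. unfold thp. apply smk_add. apply smk_theta; auto.
  apply smk_mul. apply smk_const. apply smk_S_le; auto.
Qed.

Arguments thp : simpl never.
Arguments theta : simpl never.

Section B.
Variable w : R.
Definition Bt (P Q : R -> Cplx) : R -> Cplx :=
  fun t => (RtoC t * RtoC (Rpower t w) * (P t * Cconj (Q t)))%Cplx.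
Definition Dt (ar : R) (P Q : R -> Cplx) : R -> Cplx :=
  fun t => (RtoC (Rpower t w) * (thp (RtoC ar) P t * Cconj (Q t)
                                 + P t * Cconj (thp (RtoC (w + 1 - ar)) Q t)))%Cplx.

Lemma hasD_Bt ar P Q : smk 1 P -> smk 1 Q -> hasD (Bt P Q) (Dt ar P Q).
Proof.
  intros [P' [HP _]] [Q' [HQ _]].
  eapply hasD_ext.
  - unfold Bt. eapply (hasD_mul (fun t => RtoC t * RtoC (Rpower t w))%Cplx).
    eapply (hasD_mul (fun t => RtoC t)). apply hasD_id. apply hasD_rpow.
    eapply (hasD_mul P). exact HP. eapply (hasD_conj Q). exact HQ.
  - intros t Ht. unfold Dt, thp, theta.
    rewrite (agree_deriv' P P' HP t Ht), (agree_deriv' Q Q' HQ t Ht).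
    apply Ceq; simpl; field; lra.
Qed.
End B.


Definition Cinv (z : Cplx) : Cplx :=
  mkC (re z / (re z * re z + im z * im z)) (- im z / (re z * re z + im z * im z)).
Definition Cdiv (z w : Cplx) : Cplx := Cmul z (Cinv w).

Lemma Cring : ring_theory C0 Defs.C1 Cadd Cmul Csub Copp (@eq Cplx).
Proof.
  constructor; intros; apply Ceq; simpl; ring.
Qed.

Lemma Cfield : field_theory C0 Defs.C1 Cadd Cmul Csub Copp Cdiv Cinv (@eq Cplx).
Proof.
  constructor.
  - exact Cring.
  - intro H. injection H. lra.
  - reflexivity.
  - intros p Hp. destruct p as [a b].
    assert (a * a + b * b <> 0).
    { intro H. apply Hp. assert (a = 0) by nra. assert (b = 0) by nra. subst.
      reflexivity. }
    apply Ceq; simpl; field; auto.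
Qed.

Add Field Cfieldi : Cfield.

Lemma RtoC_add a b : RtoC (a + b) = Cadd (RtoC a) (RtoC b).
Proof. apply Ceq; simpl; ring. Qed.
Lemma RtoC_sub a b : RtoC (a - b) = Csub (RtoC a) (RtoC b).
Proof. apply Ceq; simpl; ring. Qed.
Lemma RtoC_mul a b : RtoC (a * b) = Cmul (RtoC a) (RtoC b).
Proof. apply Ceq; simpl; ring. Qed.
Lemma RtoC_opp a : RtoC (- a) = Copp (RtoC a).
Proof. apply Ceq; simpl; ring. Qed.
Lemma RtoC_inv a : a <> 0 -> RtoC (/ a) = Cinv (RtoC a).
Proof. intro H; apply Ceq; simpl; field; auto. Qed.
Lemma RtoC_0 : RtoC 0 = C0. Proof. reflexivity. Qed.
Lemma RtoC_1 : RtoC 1 = Defs.C1. Proof. reflexivity. Qed.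
Lemma RtoC_2 : RtoC 2 = Cadd Defs.C1 Defs.C1.
Proof. apply Ceq; simpl; ring. Qed.
Lemma RtoC_4 : RtoC 4 = Cadd (Cadd Defs.C1 Defs.C1) (Cadd Defs.C1 Defs.C1).
Proof. apply Ceq; simpl; ring. Qed.
Lemma RtoC_m1 : RtoC (-1) = Copp Defs.C1.
Proof. apply Ceq; simpl; ring. Qed.
Lemma RtoC_m2 : RtoC (-2) = Copp (Cadd Defs.C1 Defs.C1).
Proof. apply Ceq; simpl; ring. Qed.
Lemma C2_nz : Cadd Defs.C1 Defs.C1 <> C0.
Proof. intro H; injection H; lra. Qed.
Lemma RtoC_nz a : a <> 0 -> RtoC a <> C0.
Proof. intros H E; injection E; auto. Qed.

Ltac Cprep t :=
  unfold x2;
  repeat first [ rewrite (RtoC_inv (t * t)) by (apply Rmult_integral_contrapositive; split; lra)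
               | rewrite (RtoC_inv t) by lra
               | rewrite (RtoC_inv 2) by lra
               | rewrite RtoC_add | rewrite RtoC_sub | rewrite RtoC_mul | rewrite RtoC_opp
               | rewrite RtoC_0 | rewrite RtoC_1 | rewrite RtoC_2 | rewrite RtoC_4
               | rewrite RtoC_m1 | rewrite RtoC_m2 ].

Ltac Cfield t := Cprep t; field; repeat split;
  first [ apply C2_nz | apply RtoC_nz; lra | idtac ].


Lemma FTC_mine f B a b (pr : Riemann_integrable f a b) : a <= b ->
  (forall x, a <= x <= b -> continuity_pt f x) ->
  (forall x, a <= x <= b -> derivable_pt_lim B x (f x)) -> RiemannInt pr = B b - B a.
Proof.
  intros H Hc HD.
  rewrite (RiemannInt_P20 H (FTC_P1 H Hc) pr).
  assert (H1 := RiemannInt_P29 H Hc).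
  assert (H2 : antiderivative f B a b).
  { split; auto. intros x Hx. exists (exist _ (f x) (HD x Hx)). reflexivity. }
  destruct (antiderivative_Ucte _ _ _ _ _ H1 H2) as [C HC].
  rewrite (HC b), (HC a); [ring | split; lra | split; lra].
Qed.

Lemma cont_zero f a : continuity_pt f a ->
  (forall d, 0 < d -> exists x, x <> a /\ Rabs (x - a) < d /\ f x = 0) -> f a = 0.
Proof.
  intros Hc Hp. destruct (Req_dec (f a) 0) as [|Hne]; auto. exfalso.
  assert (He : 0 < Rabs (f a)) by (apply Rabs_pos_lt; auto).
  destruct (Hc _ He) as [d [Hd Hx]].
  destruct (Hp d Hd) as [x [Hxa [Hxd Hfx]]].
  assert (K := Hx x). unfold dist in K; simpl in K; unfold R_dist in K.
  rewrite Hfx in K. replace (0 - f a) with (- f a) in K by ring. rewrite Rabs_Ropp in K.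
  assert (Rabs (f a) < Rabs (f a)) by (apply K; split; [split; [exact I| auto] | auto]). lra.
Qed.

Lemma jets_cont F n x : jets F -> 0 < x ->
  continuity_pt (fun t => re (F n t)) x /\ continuity_pt (fun t => im (F n t)) x.
Proof.
  intros J Hx. destruct (J n x Hx) as [A B]. split; apply derivable_continuous_pt.
  exists (re (F (S n) x)); exact A. exists (im (F (S n) x)); exact B.
Qed.

Lemma jets_zero F p q : jets F -> 0 <= p < q -> (forall t, p < t < q -> F 0%nat t = C0) ->
  forall k t, p < t < q -> F k t = C0.
Proof.
  intros J Hpq H0 k. induction k as [|k IH]; auto. intros t Ht.
  destruct (J k t ltac:(lra)) as [A B].
  assert (Z : forall g : R -> R, (forall s, p < s < q -> g s = 0) -> derivable_pt_lim g t 0).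
  { intros g Hg. apply (derivable_pt_lim_locally_ext (fun _ => 0) g t p q); auto.
    intros; symmetry; auto. apply derivable_pt_lim_const. }
  apply Ceq; simpl.
  - apply (uniqueness_limite (fun s => re (F k s)) t); auto. apply Z. intros s Hs; rewrite IH; auto.
  - apply (uniqueness_limite (fun s => im (F k s)) t); auto. apply Z. intros s Hs; rewrite IH; auto.
Qed.

Lemma jets_zero_at F a : jets F -> 0 < a ->
  (forall d, 0 < d -> exists x, 0 < x /\ x <> a /\ Rabs (x - a) < d /\ forall k, F k x = C0) ->
  forall k, F k a = C0.
Proof.
  intros J Ha Hp k. destruct (jets_cont F k a J Ha) as [C1' C2'].
  apply Ceq; simpl.
  - apply (cont_zero (fun t => re (F k t))); auto. intros d Hd.
    destruct (Hp d Hd) as [x [_ [? [? Hk]]]]. exists x; rewrite Hk; auto.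
  - apply (cont_zero (fun t => im (F k t))); auto. intros d Hd.
    destruct (Hp d Hd) as [x [_ [? [? Hk]]]]. exists x; rewrite Hk; auto.
Qed.

Lemma hasD_cont f D t : hasD f D -> 0 < t ->
  continuity_pt (fun s => re (f s)) t /\ continuity_pt (fun s => im (f s)) t.
Proof.
  intros H Ht. destruct (H t Ht) as [A B]. split; apply derivable_continuous_pt.
  exists (re (D t)); exact A. exists (im (D t)); exact B.
Qed.

Lemma int_eq (f1 f2 B : R -> R) a b : a <= b ->
  (forall t, a <= t <= b -> continuity_pt f1 t) ->
  (forall t, a <= t <= b -> continuity_pt f2 t) ->
  (forall t, a <= t <= b -> derivable_pt_lim B t (f1 t - f2 t)) ->
  B a = 0 -> B b = 0 -> exists I, RInt_is f1 a b I /\ RInt_is f2 a b I.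
Proof.
  intros Hab C1' C2' HD Ba Bb.
  set (pr1 := @continuity_implies_RiemannInt f1 a b Hab C1').
  set (pr2 := @continuity_implies_RiemannInt f2 a b Hab C2').
  exists (RiemannInt pr1). split. exists pr1; reflexivity.
  exists pr2.
  set (pr3 := RiemannInt_P10 (-1) pr1 pr2).
  assert (E1 := RiemannInt_P13 pr1 pr2 pr3).
  assert (E2 : RiemannInt pr3 = B b - B a).
  { apply FTC_mine; auto.
    - intros x Hx. apply (continuity_pt_plus f1 (mult_real_fct (-1) f2)); auto.
      apply continuity_pt_scal; auto.
    - intros x Hx. eapply dpl_eq. apply HD; auto. ring. reflexivity. }
  lra.
Qed.



Section S3.
Variables (mu nu : R) (F G : nat -> R -> Cplx) (u v : R -> Cplx).
Hypothesis HJF : jets F.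
Hypothesis HJG : jets G.
Hypothesis Hu : agree u (F O).
Hypothesis Hv : agree v (G O).

Definition P4 := thp (RtoC mu) u.
Definition P3 := thp (RtoC 0) P4.
Definition P2 := thp (RtoC (mu + nu)) P3.
Definition Q2 := fun t => (RtoC (/ (t * t)) * v t)%Cplx.
Definition Q3 := thp (RtoC (mu + nu + 1 + 1 - nu)) Q2.
Definition Q4 := thp (RtoC (mu + nu + 1 + 1 - (mu + nu))) Q3.
Definition Q5 := thp (RtoC (mu + nu + 1 + 1 - 0)) Q4.
Definition Q6 := thp (RtoC (mu + nu + 1 + 1 - mu)) Q5.
Definition R1 := thp (RtoC (mu + nu + 2)) u.
Definition S2 := thp (RtoC (mu + nu + 1 + 1 - (nu + 2))) v.
Definition S3 := thp (RtoC (mu + nu + 1 + 1 - (mu + nu + 2))) S2.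
Definition W1 := thp (RtoC mu) u.
Definition U2 := thp (RtoC (mu + nu + 1 + 1 - 0)) v.
Definition U3 := thp (RtoC (mu + nu + 1 + 1 - mu)) U2.

Let w := mu + nu + 1.

Lemma Hsu k : smk k u.
Proof. apply (smk_ext k (F O)). intros; symmetry; apply Hu; auto. apply smk_jets; auto. Qed.
Lemma Hsv k : smk k v.
Proof. apply (smk_ext k (G O)). intros; symmetry; apply Hv; auto. apply smk_jets; auto. Qed.
Lemma HsQ2 k : smk k Q2.
Proof. apply smk_mul. apply smk_inv2. apply Hsv. Qed.

Ltac smkt := repeat (apply smk_thp); first [apply Hsu | apply Hsv | apply HsQ2].

Definition BT1 := fun t => (Bt w P2 Q2 t - Bt w P3 Q3 t + Bt w P4 Q4 t - Bt w u Q5 t)%Cplx.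
Definition BT2 := fun t => (Bt w R1 v t - Bt w u S2 t)%Cplx.
Definition BT3 := fun t => (Bt w W1 v t - Bt w u U2 t)%Cplx.

Lemma chainT1 : hasD BT1 (fun t => RtoC (Rpower t w) *
   (thp (RtoC nu) P2 t * Cconj (Q2 t) - u t * Cconj (Q6 t)))%Cplx.
Proof.
  eapply hasD_ext. unfold BT1.
  eapply hasD_sub. eapply hasD_add. eapply hasD_sub.
  apply (hasD_Bt w nu); unfold P2, P3, P4; smkt.
  apply (hasD_Bt w (mu + nu)); unfold Q3, P3, P4; smkt.
  apply (hasD_Bt w 0); unfold Q4, Q3, P4; smkt.
  apply (hasD_Bt w mu); unfold Q5, Q4, Q3; smkt.
  intros t Ht. unfold Dt, w, Q6, Q5, Q4, Q3, P2, P3, P4.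
  apply Ceq; simpl; ring.
Qed.

Lemma chainT2 : hasD BT2 (fun t => RtoC (Rpower t w) *
   (thp (RtoC (nu + 2)) R1 t * Cconj (v t) - u t * Cconj (S3 t)))%Cplx.
Proof.
  eapply hasD_ext. unfold BT2.
  eapply hasD_sub.
  apply (hasD_Bt w (nu + 2)); unfold R1; smkt.
  apply (hasD_Bt w (mu + nu + 2)); unfold S2; smkt.
  intros t Ht. unfold Dt, w, S3, S2, R1.
  apply Ceq; simpl; ring.
Qed.

Lemma chainT3 : hasD BT3 (fun t => RtoC (Rpower t w) *
   (thp (RtoC 0) W1 t * Cconj (v t) - u t * Cconj (U3 t)))%Cplx.
Proof.
  eapply hasD_ext. unfold BT3.
  eapply hasD_sub.
  apply (hasD_Bt w 0); unfold W1; smkt.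
  apply (hasD_Bt w mu); unfold U2; smkt.
  intros t Ht. unfold Dt, w, U3, U2, W1.
  apply Ceq; simpl; ring.
Qed.

Definition cc := ((RtoC mu - RtoC nu) * (RtoC mu + RtoC nu + RtoC 2) * RtoC (/ 2))%Cplx.

Lemma idU t : 0 < t -> Dop (RtoC mu) (RtoC nu) u t =
  (RtoC (/ (t * t)) * thp (RtoC nu) P2 t - thp (RtoC (nu + 2)) R1 t - thp (RtoC 0) W1 t
   + (x2 t - cc) * u t)%Cplx.
Proof.
  intro Ht. eapply (agree_eq (Dop (RtoC mu) (RtoC nu) u) (fun t => (RtoC (/ (t * t)) * thp (RtoC nu) P2 t - thp (RtoC (nu + 2)) R1 t - thp (RtoC 0) W1 t
   + (x2 t - cc) * u t)%Cplx)); [unf; solveA | unfold P2, P3, P4, R1, W1, cc; unf; solveA | exact Ht |].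
  cbv beta. apply Ceq; simpl; field; lra.
Qed.

Lemma idV t : 0 < t -> Dop (RtoC mu) (RtoC nu) v t =
  (Q6 t - S3 t - U3 t + (x2 t - cc) * v t)%Cplx.
Proof.
  intro Ht. eapply (agree_eq (Dop (RtoC mu) (RtoC nu) v) (fun t => (Q6 t - S3 t - U3 t + (x2 t - cc) * v t)%Cplx));
   [unf; solveA | unfold Q6, Q5, Q4, Q3, Q2, S3, S2, U3, U2, cc; unf; solveA | exact Ht |].
  cbv beta. Cfield t.
Qed.

Definition Bfun := fun t => (BT1 t - BT2 t - BT3 t)%Cplx.
Definition I1 := L2_integrand (mu + nu + 1) (Dop (RtoC mu) (RtoC nu) u) v.
Definition I2 := L2_integrand (mu + nu + 1) u (Dop (RtoC mu) (RtoC nu) v).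

Lemma key : hasD Bfun (fun t => I1 t - I2 t)%Cplx.
Proof.
  eapply hasD_ext. unfold Bfun. eapply hasD_sub. eapply hasD_sub.
  apply chainT1. apply chainT2. apply chainT3.
  intros t Ht. unfold I1, I2, L2_integrand. rewrite (idU t Ht), (idV t Ht).
  unfold Q2, w, cc. apply Ceq; simpl; field; lra.
Qed.

Lemma hasD_I1 : exists D, hasD I1 D.
Proof.
  eassert (A : agree I1 _) by (unfold I1; unf; solveA).
  match type of A with agree _ ?E => eassert (D : hasD E _) by solveD end.
  eexists; eapply hasD_agree; eauto.
Qed.
Lemma hasD_I2 : exists D, hasD I2 D.
Proof.
  eassert (A : agree I2 _) by (unfold I2; unf; solveA).
  match type of A with agree _ ?E => eassert (D : hasD E _) by solveD end.
  eexists; eapply hasD_agree; eauto.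
Qed.

Lemma Bzero a : 0 < a -> (forall k, F k a = C0) -> Bfun a = C0.
Proof.
  intros Ha HFa.
  assert (Zu : u a = C0) by (rewrite (Hu a Ha); auto).
  assert (Z4 : P4 a = C0).
  { eassert (A : agree P4 _) by (unfold P4; unf; solveA). rewrite (A a Ha). cbv beta.
    rewrite !HFa. apply Ceq; simpl; ring. }
  assert (Z3 : P3 a = C0).
  { eassert (A : agree P3 _) by (unfold P3, P4; unf; solveA). rewrite (A a Ha). cbv beta.
    rewrite !HFa. apply Ceq; simpl; ring. }
  assert (Z2 : P2 a = C0).
  { eassert (A : agree P2 _) by (unfold P2, P3, P4; unf; solveA). rewrite (A a Ha). cbv beta.
    rewrite !HFa. apply Ceq; simpl; ring. }
  assert (ZR : R1 a = C0).
  { eassert (A : agree R1 _) by (unfold R1; unf; solveA). rewrite (A a Ha). cbv beta.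
    rewrite !HFa. apply Ceq; simpl; ring. }
  assert (ZW : W1 a = C0).
  { eassert (A : agree W1 _) by (unfold W1; unf; solveA). rewrite (A a Ha). cbv beta.
    rewrite !HFa. apply Ceq; simpl; ring. }
  unfold Bfun, BT1, BT2, BT3, Bt. rewrite Zu, Z4, Z3, Z2, ZR, ZW.
  apply Ceq; simpl; ring.
Qed.
End S3.



Lemma part3_core mu nu F G u v (HJF : jets F) (HJG : jets G)
  (Hu : agree u (F O)) (Hv : agree v (G O)) a b : 0 < a -> a <= b ->
  (forall k, F k a = C0) -> (forall k, F k b = C0) ->
  exists I, CInt_is (I1 mu nu u v) a b I /\ CInt_is (I2 mu nu u v) a b I.
Proof.
  intros Ha Hab HFa HFb.
  destruct (hasD_I1 mu nu F G u v HJF HJG Hu Hv) as [D1 HD1].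
  destruct (hasD_I2 mu nu F G u v HJF HJG Hu Hv) as [D2 HD2].
  assert (K := key mu nu F G u v HJF HJG Hu Hv).
  assert (Ba : Bfun mu nu u v a = C0) by (apply (Bzero mu nu F u v HJF Hu a Ha HFa)).
  assert (Bb : Bfun mu nu u v b = C0) by (apply (Bzero mu nu F u v HJF Hu b ltac:(lra) HFb)).
  destruct (int_eq (fun t => re (I1 mu nu u v t)) (fun t => re (I2 mu nu u v t))
     (fun t => re (Bfun mu nu u v t)) a b Hab) as [Ir [Hr1 Hr2]].
  { intros t Ht; apply (hasD_cont _ D1 t HD1); lra. }
  { intros t Ht; apply (hasD_cont _ D2 t HD2); lra. }
  { intros t Ht. destruct (K t ltac:(lra)) as [A _]. eapply dpl_eq. exact A. simpl; ring. reflexivity. }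
  { rewrite Ba; reflexivity. } { rewrite Bb; reflexivity. }
  destruct (int_eq (fun t => im (I1 mu nu u v t)) (fun t => im (I2 mu nu u v t))
     (fun t => im (Bfun mu nu u v t)) a b Hab) as [Ii [Hi1 Hi2]].
  { intros t Ht; apply (hasD_cont _ D1 t HD1); lra. }
  { intros t Ht; apply (hasD_cont _ D2 t HD2); lra. }
  { intros t Ht. destruct (K t ltac:(lra)) as [_ A]. eapply dpl_eq. exact A. simpl; ring. reflexivity. }
  { rewrite Ba; reflexivity. } { rewrite Bb; reflexivity. }
  exists (mkC Ir Ii). split; split; assumption.
Qed.


Definition coef (mu nu lam : Cplx) (j k : nat) : Cplx :=
  match j, k with
  | 3, 0 => RtoC 2 * (mu + nu)
  | 2, 0 => (mu + nu) * (mu + nu) + mu * nu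
  | 2, 2 => RtoC (-2)
  | 1, 0 => mu * nu * (mu + nu)
  | 1, 2 => - (RtoC 2 * mu + RtoC 2 * nu + RtoC 4)
  | 0, 2 => - ((nu + RtoC 2) * (mu + nu + RtoC 2)) - (mu - nu) * (mu + nu + RtoC 2) * RtoC (/ 2) - lam
  | 0, 4 => RtoC 1
  | _, _ => C0
  end%Cplx.
Definition bco (mu nu lam : Cplx) (j : nat) (x : R) : Cplx :=
  Csum 5 (fun k => coef mu nu lam j k * Cpow (RtoC x) k)%Cplx.

Lemma Csum_S n f : Csum (S n) f = (Csum n f + f n)%Cplx.
Proof.
  unfold Csum. rewrite seq_S, map_app, fold_right_app. simpl.
  generalize (map f (seq 0 n)). induction l as [|a l IH]; simpl.
  - apply Ceq; simpl; ring.
  - rewrite IH. apply Ceq; simpl; ring.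
Qed.

Lemma series_poly (c : nat -> Cplx) x : (forall k, (5 <= k)%nat -> c k = C0) ->
  Cseries_cv c x (Csum 5 (fun k => c k * Cpow (RtoC x) k)%Cplx).
Proof.
  intros Hc.
  assert (E : forall N, (4 <= N)%nat -> Csum (S N) (fun k => c k * Cpow (RtoC x) k)%Cplx
                              = Csum 5 (fun k => c k * Cpow (RtoC x) k)%Cplx).
  { intros N HN. induction HN. reflexivity.
    rewrite Csum_S, IHHN, Hc by lia. apply Ceq; simpl; ring. }
  split; intros eps Heps; exists 4%nat; intros n Hn; rewrite E by lia;
    unfold R_dist; rewrite Rminus_diag, Rabs_R0; lra.
Qed.

Lemma part2 mu nu lam : reg_sing_at0 (shift_op (Dop mu nu) lam)
         (C0 :: (- mu)%Cplx :: (- nu)%Cplx :: (- mu - nu)%Cplx :: nil).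
Proof.
  exists 4%nat, (bco mu nu lam), (fun x => RtoC (/ (x * x))), 1.
  split; [lra|]. split; [reflexivity|]. split; [|split; [|split]].
  - intros j Hj. exists (coef mu nu lam j). intros x _. apply series_poly.
    intros k Hk. do 5 (destruct k; [lia|]). destruct j as [|[|[|[|j]]]]; reflexivity.
  - intros x [Hx _] H. injection H as H. assert (0 < / (x * x)).
    { apply Rinv_0_lt_compat, Rmult_lt_0_compat; lra. } lra.
  - intros u [F [H0 HJ]] x [Hx _].
    assert (Hu : agree u (F O)) by (intros t Ht; symmetry; auto).
    eapply (agree_eq (shift_op (Dop mu nu) lam u)
      (fun t => RtoC (/ (t * t)) * (Nat.iter 4 theta u t + Csum 4 (fun j => bco mu nu lam j t * Nat.iter j theta u t)))%Cplx);
      [unf; solveA | cbv beta iota delta [Csum seq map fold_right]; unf; solveA | exact Hx |].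
    cbv beta. unfold bco, coef. apply Ceq; simpl; field; lra.
  - intros s. unfold bco, coef. apply Ceq; simpl; ring.
Qed.

Section T.
Variables (F : nat -> R -> Cplx) (u : R -> Cplx).
Hypothesis HJ : jets F.
Hypothesis Hu : agree u (F O).
Lemma part5a mu x : 0 < x -> Dop mu (RtoC (-1)) u x = (Sm1 mu (Sm1 mu u) x - Cm1 mu * u x)%Cplx.
Proof.
  intro Hx. eapply (agree_eq (Dop mu (RtoC (-1)) u) (fun t => Sm1 mu (Sm1 mu u) t - Cm1 mu * u t)%Cplx); [unf; solveA | unf; solveA | exact Hx |].
  cbv beta. unfold Cm1. apply Ceq; simpl; field; lra.
Qed.
Lemma part5b mu x : 0 < x -> Dop mu (RtoC 1) u x = (Sp1 mu (Sp1 mu u) x - Cp1 mu * u x)%Cplx.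
Proof.
  intro Hx. eapply (agree_eq (Dop mu (RtoC 1) u) (fun t => Sp1 mu (Sp1 mu u) t - Cp1 mu * u t)%Cplx); [unf; solveA | unf; solveA | exact Hx |].
  cbv beta. unfold Cp1. apply Ceq; simpl; field; lra.
Qed.
End T.


Section T.
Variables (F : nat -> R -> Cplx) (u : R -> Cplx).
Hypothesis HJ : jets F.
Hypothesis Hu : agree u (F O).
Lemma part1 mu nu x : 0 < x -> Dop mu nu u x = Dop nu mu u x.
Proof.
  intro Hx. eapply (agree_eq (Dop mu nu u) (Dop nu mu u)); [unf; solveA | unf; solveA | exact Hx |].
  cbv beta. apply Ceq; simpl; field; lra.
Qed.
End T.

Lemma zero_ab F u a b : jets F -> agree u (F O) -> 0 < a -> a <= b ->
  (forall x, 0 < x -> (x < a \/ b < x) -> u x = C0) ->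
  (forall k, F k a = C0) /\ (forall k, F k b = C0).
Proof.
  intros J Hu Ha Hab Hz. split.
  - apply jets_zero_at; auto. intros d Hd.
    assert (Hm : 0 < Rmin d a) by (apply Rmin_pos; lra).
    assert (Hm1 := Rmin_l d a). assert (Hm2 := Rmin_r d a).
    exists (a - Rmin d a / 2). split; [lra|]. split; [lra|]. split.
    + rewrite Rabs_left by lra. lra.
    + intros k. apply (jets_zero F 0 a J ltac:(lra)); [|lra].
      intros t Ht. rewrite <- (Hu t ltac:(lra)). apply Hz; lra.
  - apply jets_zero_at; [auto|lra|]. intros d Hd.
    assert (Hm : 0 < Rmin d 1) by (apply Rmin_pos; lra).
    assert (Hm1 := Rmin_l d 1). assert (Hm2 := Rmin_r d 1).
    exists (b + Rmin d 1 / 2). split; [lra|]. split; [lra|]. split.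
    + rewrite Rabs_right by lra. lra.
    + intros k. apply (jets_zero F b (b + 1) J ltac:(lra)); [|lra].
      intros t Ht. rewrite <- (Hu t ltac:(lra)). apply Hz; lra.
Qed.

Theorem proposition2p1 :
  (forall mu nu : Cplx, forall u, smooth_pos u -> forall x, 0 < x ->
       Dop mu nu u x = Dop nu mu u x) /\
  (forall mu nu lam : Cplx,
       reg_sing_at0 (shift_op (Dop mu nu) lam)
         (C0 :: (- mu)%Cplx :: (- nu)%Cplx :: (- mu - nu)%Cplx :: nil)) /\
  (forall mu nu : R, -1 <= mu -> -1 <= nu ->
     forall u v, Ccinf_pos u -> Ccinf_pos v ->
     forall a b, 0 < a -> a <= b ->
       (forall x, 0 < x -> (x < a \/ b < x) -> u x = C0 /\ v x = C0) ->
       exists I,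
         CInt_is (L2_integrand (mu + nu + 1) (Dop (RtoC mu) (RtoC nu) u) v) a b I /\
         CInt_is (L2_integrand (mu + nu + 1) u (Dop (RtoC mu) (RtoC nu) v)) a b I) /\
  (forall mu : Cplx, forall u, smooth_pos u -> forall x, 0 < x ->
       Dop mu (RtoC (-1)) u x = (Sm1 mu (Sm1 mu u) x - Cm1 mu * u x)%Cplx /\
       Dop mu (RtoC 1) u x = (Sp1 mu (Sp1 mu u) x - Cp1 mu * u x)%Cplx).
Proof.
  split; [|split; [|split]].
  - intros mu nu u [F [H0 HJ]] x Hx.
    apply (part1 F u HJ); auto. intros t Ht; symmetry; auto.
  - apply part2.
  - intros mu nu _ _ u v [[F [HF0 HJF]] _] [[G [HG0 HJG]] _] a b Ha Hab Hz.
    assert (Hu : agree u (F O)) by (intros t Ht; symmetry; auto).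
    assert (Hv : agree v (G O)) by (intros t Ht; symmetry; auto).
    destruct (zero_ab F u a b HJF Hu Ha Hab) as [HFa HFb].
    { intros x Hx H; apply (Hz x Hx H). }
    exact (part3_core mu nu F G u v HJF HJG Hu Hv a b Ha Hab HFa HFb).
  - intros mu u [F [H0 HJ]] x Hx.
    assert (Hu : agree u (F O)) by (intros t Ht; symmetry; auto).
    split; [apply (part5a F u HJ Hu) | apply (part5b F u HJ Hu)]; auto.
Qed.
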